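(* The cycle-free fragments of G3s + $(\Box\mathrm{Cut})$, G3s + (Cut) and G3s are identical: a sequent has a prehistoric-cycle-free proof in one of these three systems if and only if it has one in each of the others.
   Context: S4 formulas: $A ::= \bot \mid P \mid A_0\to A_1 \mid \Box A$ ($P$ atomic). Sequents $\Gamma\supset\Delta$ use finite multisets; $\Box\Gamma:=\{\Box C\mid C\in\Gamma\}$. G3s rules: (Ax) $P,\Gamma\supset\Delta,P$ ($P$ atomic); $(\bot\supset)$ $\bot,\Gamma\supset\Delta$; $(\to\supset)$ from $\Gamma\supset\Delta,A$ and $B,\Gamma\supset\Delta$ infer $A\to B,\Gamma\supset\Delta$; $(\supset\to)$ from $A,\Gamma\supset\Delta,B$ infer $\Gamma\supset\Delta,A\to B$; $(\Box\supset)$ from $A,\Box A,\Gamma\supset\Delta$ infer $\Box A,\Gamma\supset\Delta$; $(\supset\Box)$ from $\Box\Gamma\supset A$ infer $\Gamma',\Box\Gamma\supset\Delta',\Box A$. (Cut): from $\Gamma\supset\Delta,A$ and $A,\Gamma\supset\Delta$ infer $\Gamma\supset\Delta$. $(\Box\mathrm{Cut})$: from $\Gamma\supset\Delta,\Box A,\Box B$ and $\Gamma\supset\Delta,\Box(A\to B),\Box B$ infer $\Gamma\supset\Delta,\Box B$. The system G3s + $(\Box\mathrm{Cut})$ is G3s with the rule $(\Box\mathrm{Cut})$ added; G3s + (Cut) is G3s with (Cut) added. In a rule instance, formulas of $\Gamma,\Delta,\Box\Gamma$ repeated in premise(s) and conclusion are side formulas; $\Gamma',\Delta'$ (and $\Gamma,\Delta$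 in axioms) are weakening formulas; the distinguished new formula of the conclusion is principal and the distinguished formulas of the premises are active. Correspondence of symbol occurrences: a symbol occurrence in a side formula of a premise directly corresponds to the same occurrence in the conclusion; an active formula of a premise directly corresponds to the topmost occurrence of that formula as a subformula of the principal formula, with its symbol occurrences corresponding accordingly; in (Cut) the two active occurrences of the cut formula (and their symbols) correspond; in $(\Box\mathrm{Cut})$ the outermost $\Box$'s of $\Box A$, $\Box(A\to B)$ and all occurrences of $\Box B$ correspond, the two occurrences of the subformula $A$ correspond symbolwise, and the occurrences of the subformula $B$ correspond symbolwise. Correspondence is the reflexive, symmetric, transitive closure; a family is an equivalence class of $\Box$-occurrences. $i\prec j$ (prehistoric relation) if some $(\supset\Box)$ rule whose principal $\Box A$ has its outermost $\Box$ in family $j$ has a premise containing a $\Box$-occurrence of family $i$. A prehistoric cycle is $i_0\prec\cdots\prec i_{n-1}\prec i_0$ ($n\ge1$); a proof is prehistoric-cycle-free if it has none. The cycle-free fragment of a system is the set of sequents having a prehistoric-cycle-free proof in that system. (For cut-free G3s proofs, restricting $\prec$ to families introduced by $(\supset\Box)$ rules yields the same cycles, since other families have no prehistoric predecessors.) *)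

(* Defs.v *)
From Stdlib Require Import List Permutation Relations.
Import ListNotations.

Inductive form : Type :=
| Bot : form
| Var : nat -> form
| Imp : form -> form -> form
| Box : form -> form.

(** Formulas in which every Box occurrence carries a label (the name of
    its family).  Correspondence of Box-occurrences in a
    rule instance is enforced by requiring corresponding occurrences to
    carry the same label. *)
Inductive aform : Type :=
| ABot : aform
| AVar : nat -> aform
| AImp : aform -> aform -> aform
| ABox : nat -> aform -> aform.

Fixpoint erase (a : aform) : form :=
  match a with
  | ABot => Bot
  | AVar p => Var p
  | AImp a b => Imp (erase a) (erase b)
  | ABox _ a => Box (erase a)
  end.

Fixpoint labels (a : aform) : list nat :=
  match a with
  | ABot | AVar _ => []
  | AImp a b => labels a ++ labels b
  | ABox l a => l :: labels a
  end.

Definition labels_list (G : list aform) : list nat := flat_map labels G.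

Definition isABox (a : aform) : Prop := exists l c, a = ABox l c.

Inductive sys : Type := G3s | G3s_Cut | G3s_BoxCut.

(** Sequents are
    multisets, represented by lists up to permutation (constructor
    [d_perm], which is the identity on the multiset sequent and on all
    symbol occurrences). *)
Inductive deriv (s : sys) : list aform -> list aform -> Type :=
| d_perm : forall G D G' D',
    deriv s G D -> Permutation G G' -> Permutation D D' -> deriv s G' D'
| d_ax : forall (p : nat) G D,
    deriv s (AVar p :: G) (AVar p :: D)
| d_bot : forall G D,
    deriv s (ABot :: G) D
| d_impL : forall A B G D,
    deriv s G (A :: D) -> deriv s (B :: G) D -> deriv s (AImp A B :: G) D
| d_impR : forall A B G D,
    deriv s (A :: G) (B :: D) -> deriv s G (AImp A B :: D)
| d_boxL : forall l A G D,
    deriv s (A :: ABox l A :: G) D -> deriv s (ABox l A :: G) D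
| d_boxR : forall (j : nat) (A : aform) (G0 Gw Dw : list aform),
    Forall isABox G0 ->
    deriv s G0 [A] -> deriv s (Gw ++ G0) (ABox j A :: Dw)
| d_cut : s = G3s_Cut -> forall A G D,
    deriv s G (A :: D) -> deriv s (A :: G) D -> deriv s G D
| d_boxcut : s = G3s_BoxCut -> forall l A B G D,
    deriv s G (ABox l A :: ABox l B :: D) ->
    deriv s G (ABox l (AImp A B) :: ABox l B :: D) ->
    deriv s G (ABox l B :: D).

Fixpoint prehist {s G D} (d : deriv s G D) : nat -> nat -> Prop :=
  match d with
  | d_perm _ _ _ _ _ d1 _ _ => prehist d1
  | d_ax _ _ _ _ => fun _ _ => False
  | d_bot _ _ _ => fun _ _ => False
  | d_impL _ _ _ _ _ d1 d2 => fun i j => prehist d1 i j \/ prehist d2 i j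
  | d_impR _ _ _ _ _ d1 => prehist d1
  | d_boxL _ _ _ _ _ d1 => prehist d1
  | d_boxR _ j0 A G0 _ _ _ d1 => fun i j =>
      (j = j0 /\ In i (labels_list G0 ++ labels A)) \/ prehist d1 i j
  | d_cut _ _ _ _ _ d1 d2 => fun i j => prehist d1 i j \/ prehist d2 i j
  | d_boxcut _ _ _ _ _ _ _ d1 d2 => fun i j => prehist d1 i j \/ prehist d2 i j
  end.

Definition cycle_free {s G D} (d : deriv s G D) : Prop :=
  forall i, ~ clos_trans nat (prehist d) i i.

Definition cf_provable (s : sys) (Gamma Delta : list form) : Prop :=
  exists (G D : list aform) (d : deriv s G D),
    map erase G = Gamma /\ map erase D = Delta /\ cycle_free d.

(* Main.v *)
Require Import Defs.
From Stdlib Require Import List Permutation Relations Lia.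
Import ListNotations.


Definition aform_eq_dec : forall a b : aform, {a = b} + {a <> b}.
Proof. decide equality; apply PeanoNat.Nat.eq_dec. Defined.

Inductive Qh (R : nat -> nat -> Prop) : nat -> list aform -> list aform -> Prop :=
| q_ax n p G D : In (AVar p) G -> In (AVar p) D -> Qh R n G D
| q_bot n G D : In ABot G -> Qh R n G D
| q_impL n A B G D : In (AImp A B) G -> Qh R n G (A::D) -> Qh R n (B::G) D -> Qh R (S n) G D
| q_impR n A B G D : In (AImp A B) D -> Qh R n (A::G) (B::D) -> Qh R (S n) G D
| q_boxL n l A G D : In (ABox l A) G -> Qh R n (A::G) D -> Qh R (S n) G D
| q_boxR n j A H G D : In (ABox j A) D -> Forall isABox H -> incl H G ->
    (forall i, In i (labels_list H ++ labels A) -> R i j) -> Qh R n H [A] -> Qh R (S n) G D.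

Lemma icc {A} (a : A) l l' : incl l l' -> incl (a::l) (a::l').
Proof. intros H x [->|Hx]; [left; auto | right; auto]. Qed.

Ltac cl0 := simpl in *; repeat rewrite in_app_iff in *; tauto.
Ltac cl1 := cl0 || match goal with H : incl ?l _, H' : In ?y ?l |- _ =>
   let h := fresh in pose proof (H _ H') as h; clear H'; cl0 end.
Ltac cl2 := cl1 || match goal with H : incl ?l _, H' : In ?y ?l |- _ =>
   let h := fresh in pose proof (H _ H') as h; clear H'; cl1 end.
Ltac si := let x := fresh "x" in let Hx := fresh "Hx" in
  intros x Hx; simpl in Hx; repeat rewrite in_app_iff in Hx; repeat match goal with H : _ \/ _ |- _ => destruct H end;
  subst; cl2.

Lemma Qmono R : forall n G D, Qh R n G D -> forall G' D', incl G G' -> incl D D' -> Qh R n G' D'.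
Proof.
  induction 1; intros G' D' HG HD.
  - eapply q_ax; eauto.
  - eapply q_bot; eauto.
  - eapply q_impL; eauto. apply IHQh1; auto; apply icc; auto. apply IHQh2; auto; apply icc; auto.
  - eapply q_impR; eauto. apply IHQh; apply icc; auto.
  - eapply q_boxL; eauto. apply IHQh; auto; apply icc; auto.
  - eapply q_boxR; eauto. intros x Hx; auto.
Qed.

Lemma Qlift R : forall n G D, Qh R n G D -> Qh R (S n) G D.
Proof.
  induction 1.
  - eapply q_ax; eauto.
  - eapply q_bot; eauto.
  - eapply q_impL; eauto.
  - eapply q_impR; eauto.
  - eapply q_boxL; eauto.
  - eapply q_boxR; eauto.
Qed.

Lemma Qle R n m G D : n <= m -> Qh R n G D -> Qh R m G D.
Proof. induction 1; auto. intros; apply Qlift; auto. Qed.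

Definition Q R G D := exists n, Qh R n G D.

Lemma Q_mono R G D G' D' : Q R G D -> incl G G' -> incl D D' -> Q R G' D'.
Proof. unfold Q; intros [n H] ??; exists n; eapply Qmono; eauto. Qed.

Lemma Q_ax R p G D : In (AVar p) G -> In (AVar p) D -> Q R G D.
Proof. unfold Q; exists 0; eapply q_ax; eauto. Qed.
Lemma Q_bot R G D : In ABot G -> Q R G D.
Proof. unfold Q; exists 0; eapply q_bot; eauto. Qed.
Lemma Q_impL R A B G D : In (AImp A B) G -> Q R G (A::D) -> Q R (B::G) D -> Q R G D.
Proof. unfold Q; intros H [n1 H1] [n2 H2]; exists (S (max n1 n2)); eapply q_impL; [exact H| apply (Qle _ n1) | apply (Qle _ n2)]; auto; lia. Qed.
Lemma Q_impR R A B G D : In (AImp A B) D -> Q R (A::G) (B::D) -> Q R G D.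
Proof. unfold Q; intros H [n1 H1]; exists (S n1); eapply q_impR; eauto. Qed.
Lemma Q_boxL R l A G D : In (ABox l A) G -> Q R (A::G) D -> Q R G D.
Proof. unfold Q; intros H [n1 H1]; exists (S n1); eapply q_boxL; eauto. Qed.
Lemma Q_boxR R j A H G D : In (ABox j A) D -> Forall isABox H -> incl H G ->
    (forall i, In i (labels_list H ++ labels A) -> R i j) -> Q R H [A] -> Q R G D.
Proof. unfold Q; intros ???? [n1 H1]; exists (S n1); eapply q_boxR; eauto. Qed.

Lemma box_notimp H x : Forall isABox H -> In x H -> forall X Y, x <> AImp X Y.
Proof. intros HF Hx X Y ->. rewrite Forall_forall in HF. destruct (HF _ Hx) as [? [? E]]; discriminate. Qed.
Lemma box_notvar H x : Forall isABox H -> In x H -> forall p, x <> AVar p.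
Proof. intros HF Hx p ->. rewrite Forall_forall in HF. destruct (HF _ Hx) as [? [? E]]; discriminate. Qed.


Lemma Linv R : forall n G D, Qh R n G D -> forall X Y G' D', incl G (AImp X Y :: G') -> incl D D' ->
  Qh R n G' (X::D') /\ Qh R n (Y::G') D'.
Proof.
  induction 1; intros X Y G' D' HG HD.
  - destruct (HG _ H) as [E|Hi]; [discriminate|].
    split; eapply q_ax; eauto; simpl; auto.
  - destruct (HG _ H) as [E|Hi]; [discriminate|].
    split; eapply q_bot; simpl; eauto.
  - destruct (IHQh1 X Y G' (A::D') HG (icc _ _ _ HD)) as [I1 I2].
    assert (HG2 : incl (B::G) (AImp X Y :: B :: G')) by si.
    destruct (IHQh2 X Y (B::G') D' HG2 HD) as [J1 J2].
    destruct (HG _ H) as [E|Hi].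
    + injection E as -> ->. split; apply Qlift.
      * eapply Qmono; [exact I1| |]; si.
      * eapply Qmono; [exact J2| |]; si.
    + split.
      * eapply q_impL; [exact Hi| |exact J1]. eapply Qmono; [exact I1| |]; si.
      * eapply q_impL; [simpl; eauto|exact I2|]. eapply Qmono; [exact J2| |]; si.
  - assert (HG2 : incl (A::G) (AImp X Y :: A :: G')) by si.
    destruct (IHQh X Y (A::G') (B::D') HG2 (icc _ _ _ HD)) as [I1 I2].
    split.
    + eapply q_impR; [simpl; eauto|]. eapply Qmono; [exact I1| |]; si.
    + eapply q_impR; [simpl; eauto|]. eapply Qmono; [exact I2| |]; si.
  - assert (HG2 : incl (A::G) (AImp X Y :: A :: G')) by si.
    destruct (IHQh X Y (A::G') D' HG2 HD) as [I1 I2].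
    destruct (HG _ H) as [E|Hi]; [discriminate|].
    split.
    + eapply q_boxL; [exact Hi|]. auto.
    + eapply q_boxL; [simpl; eauto|]. eapply Qmono; [exact I2| |]; si.
  - rename H into HH0. assert (HH : incl HH0 G').
    { intros x Hx. destruct (HG _ (H2 _ Hx)) as [E|Hi]; auto.
      exfalso; eapply box_notimp; eauto. }
    split; (eapply q_boxR; [| exact H1 | | exact H3 | exact H4]); simpl; auto; si.
Qed.

Lemma Rinv R : forall n G D, Qh R n G D -> forall X Y G' D', incl G G' -> incl D (AImp X Y :: D') ->
  Qh R n (X::G') (Y::D').
Proof.
  induction 1; intros X Y G' D' HG HD.
  - destruct (HD _ H0) as [E|Hi]; [discriminate|].
    eapply q_ax; simpl; eauto.
  - eapply q_bot; simpl; eauto.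
  - assert (HD2 : incl (A::D) (AImp X Y :: A :: D')) by si.
    pose proof (IHQh1 X Y G' (A::D') HG HD2) as I1.
    pose proof (IHQh2 X Y (B::G') D' (icc _ _ _ HG) HD) as I2.
    eapply q_impL; [simpl; eauto| |].
    + eapply Qmono; [exact I1| |]; si.
    + eapply Qmono; [exact I2| |]; si.
  - assert (HD2 : incl (B::D) (AImp X Y :: B :: D')) by si.
    pose proof (IHQh X Y (A::G') (B::D') (icc _ _ _ HG) HD2) as I1.
    destruct (HD _ H) as [E|Hi].
    + injection E as -> ->. apply Qlift. eapply Qmono; [exact I1| |]; si.
    + eapply q_impR; [simpl; eauto|]. eapply Qmono; [exact I1| |]; si.
  - pose proof (IHQh X Y (A::G') D' (icc _ _ _ HG) HD) as I1.
    eapply q_boxL; [simpl; eauto|]. eapply Qmono; [exact I1| |]; si.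
  - destruct (HD _ H0) as [E|Hi]; [discriminate|].
    eapply q_boxR; [simpl; eauto|exact H1| |exact H3|exact H4]. si.
Qed.


Definition cutP R A := forall G D, Q R G (A::D) -> Q R (A::G) D -> Q R G D.

Lemma lab_in x L i : In x L -> In i (labels x) -> In i (labels_list L).
Proof. intros. unfold labels_list. apply in_flat_map. eauto. Qed.

Lemma LeftImp R X Y : cutP R X -> cutP R Y ->
  forall n G2 D2, Qh R n G2 D2 -> forall G D, incl G2 (AImp X Y :: G) -> incl D2 D ->
  Q R (X::G) (Y::D) -> Q R G D.
Proof.
  intros cX cY. induction 1; intros G' D' HG HD Ha.
  - destruct (HG _ H) as [E|Hi]; [discriminate|]. eapply Q_ax; eauto.
  - destruct (HG _ H) as [E|Hi]; [discriminate|]. eapply Q_bot; eauto.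
  - assert (I1 : Q R G' (A::D')).
    { apply IHQh1; auto. apply icc; auto. eapply Q_mono; [exact Ha| |]; si. }
    assert (I2 : Q R (B::G') D').
    { apply IHQh2; auto. si. eapply Q_mono; [exact Ha| |]; si. }
    destruct (HG _ H) as [E|Hi].
    + injection E as <- <-.
      apply (cY G' D'); [|exact I2].
      apply (cX G' (Y::D')); [|exact Ha]. eapply Q_mono; [exact I1| |]; si.
    + eapply Q_impL; eauto.
  - assert (I1 : Q R (A::G') (B::D')).
    { apply IHQh; [si| apply icc; auto|]. eapply Q_mono; [exact Ha| |]; si. }
    eapply Q_impR; eauto.
  - destruct (HG _ H) as [E|Hi]; [discriminate|].
    assert (I1 : Q R (A::G') D').
    { apply IHQh; [si| auto|]. eapply Q_mono; [exact Ha| |]; si. }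
    eapply Q_boxL; eauto.
  - rename H into HH0. assert (HH : incl HH0 G').
    { intros x Hx. destruct (HG _ (H2 _ Hx)) as [E|Hi]; auto.
      exfalso; eapply box_notimp; eauto. }
    eapply Q_boxR; [| exact H1 | exact HH | exact H3 | exists n; exact H4]. auto.
Qed.

Definition notb (a : aform) (x : aform) : bool :=
  if aform_eq_dec x a then false else true.

Lemma LeftBox R (Htr : forall a b c, R a b -> R b c -> R a c) j X : cutP R X ->
  forall n G2 D2, Qh R n G2 D2 -> forall G D H, incl G2 (ABox j X :: G) -> incl D2 D ->
  Forall isABox H -> incl H G -> (forall i, In i (labels_list H ++ labels X) -> R i j) ->
  Q R H [X] -> Q R G D.
Proof.
  intros cX. induction 1; intros G' D' HX HG HD HXb HXG HXl Ha.
  - destruct (HG _ H) as [E|Hi]; [discriminate|]. eapply Q_ax; eauto.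
  - destruct (HG _ H) as [E|Hi]; [discriminate|]. eapply Q_bot; eauto.
  - destruct (HG _ H) as [E|Hi]; [discriminate|].
    assert (I1 : Q R G' (A::D')).
    { eapply IHQh1; eauto. apply icc; auto. }
    assert (I2 : Q R (B::G') D').
    { eapply IHQh2; eauto; si. }
    eapply Q_impL; eauto.
  - assert (I1 : Q R (A::G') (B::D')).
    { eapply IHQh; eauto; si. }
    eapply Q_impR; eauto.
  - assert (I1 : Q R (A::G') D').
    { eapply IHQh; eauto; si. }
    destruct (HG _ H) as [E|Hi].
    + injection E as <- <-.
      apply (cX G' D'); [|exact I1]. eapply Q_mono; [exact Ha| |]; si.
    + eapply Q_boxL; eauto.
  - rename H into HH0.
    destruct (in_dec aform_eq_dec (ABox j X) HH0) as [Hin|Hnin].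
    + set (H' := HX ++ filter (notb (ABox j X)) HH0).
      assert (I1 : Q R H' [A]).
      { eapply (IHQh H' [A] HX); auto.
        - intros x Hx. destruct (aform_eq_dec x (ABox j X)) as [->|Hne]; [left; auto|].
          right. unfold H'. apply in_or_app; right. apply filter_In; split; auto.
          unfold notb. destruct (aform_eq_dec x (ABox j X)); congruence.
        - apply incl_refl.
        - unfold H'; intros x Hx; apply in_or_app; left; auto. }
      eapply Q_boxR; [exact (HD _ H0) | | | | exact I1].
      * unfold H'. apply Forall_app; split; auto.
        rewrite Forall_forall in *. intros x Hx. apply filter_In in Hx. apply H1. tauto.
      * unfold H'. intros x Hx. apply in_app_or in Hx. destruct Hx as [Hx|Hx]; auto.
        apply filter_In in Hx. destruct Hx as [Hx Hn].
        destruct (HG _ (H2 _ Hx)) as [E|Hi]; auto.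
        subst x. unfold notb in Hn. destruct (aform_eq_dec (ABox j X) (ABox j X)); congruence.
      * intros i Hi. unfold H' in Hi. unfold labels_list in Hi.
        rewrite flat_map_app in Hi. rewrite <- app_assoc in Hi.
        apply in_app_or in Hi. destruct Hi as [Hi|Hi].
        -- apply Htr with j. apply HXl. apply in_or_app; left; exact Hi.
           apply H3. apply in_or_app; left. apply (lab_in _ _ _ Hin). simpl; auto.
        -- apply in_app_or in Hi. destruct Hi as [Hi|Hi].
           ++ apply H3. apply in_or_app; left.
              apply in_flat_map in Hi. destruct Hi as [x [Hx Hi]].
              apply filter_In in Hx. eapply lab_in; [apply Hx|exact Hi].
           ++ apply H3. apply in_or_app; right; exact Hi.
    + assert (HH : incl HH0 G').
      { intros x Hx. destruct (HG _ (H2 _ Hx)) as [E|Hi]; auto. subst; contradiction. }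
      eapply Q_boxR; [| exact H1 | exact HH | exact H3 | exists n; exact H4]. auto.
Qed.


Fixpoint fsize (a : aform) : nat :=
  match a with ABot | AVar _ => 1 | AImp a b => S (fsize a + fsize b) | ABox _ a => S (fsize a) end.

Lemma CutMain R (Htr : forall a b c, R a b -> R b c -> R a c) A :
  (forall B, fsize B < fsize A -> cutP R B) ->
  forall n G1 D1, Qh R n G1 D1 -> forall G D, incl G1 G -> incl D1 (A::D) -> Q R (A::G) D -> Q R G D.
Proof.
  intros IHs. induction 1; intros G' D' HG HD Hb.
  - destruct (HD _ H0) as [E|Hi].
    + subst A. eapply Q_mono; [exact Hb| |apply incl_refl]. intros x [<-|Hx]; auto.
    + eapply Q_ax; eauto.
  - eapply Q_bot; eauto.
  - assert (I1 : Q R G' (A0::D')).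
    { apply IHQh1; auto. si. eapply Q_mono; [exact Hb| |]; si. }
    assert (I2 : Q R (B::G') D').
    { apply IHQh2; [apply icc; auto|auto|]. eapply Q_mono; [exact Hb| |]; si. }
    eapply Q_impL; eauto.
  - assert (I1 : Q R (A0::G') (B::D')).
    { apply IHQh; [apply icc; auto|si|]. eapply Q_mono; [exact Hb| |]; si. }
    destruct (HD _ H) as [E|Hi].
    + subst A. destruct Hb as [m Hb].
      eapply (LeftImp R A0 B); [apply IHs; simpl; lia | apply IHs; simpl; lia | exact Hb
        | apply incl_refl | apply incl_refl | exact I1].
    + eapply Q_impR; eauto.
  - assert (I1 : Q R (A0::G') D').
    { apply IHQh; [apply icc; auto|auto|]. eapply Q_mono; [exact Hb| |]; si. }
    eapply Q_boxL; eauto.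
  - destruct (HD _ H0) as [E|Hi].
    + subst A. destruct Hb as [m Hb].
      eapply (LeftBox R Htr j A0); [apply IHs; simpl; lia | exact Hb | apply incl_refl
        | apply incl_refl | exact H1 | | exact H3 | exists n; exact H4].
      intros x Hx; auto.
    + eapply Q_boxR; [exact Hi | exact H1 | | exact H3 | exists n; exact H4].
      intros x Hx; auto.
Qed.

Lemma cut_all R (Htr : forall a b c, R a b -> R b c -> R a c) :
  forall k A, fsize A <= k -> cutP R A.
Proof.
  induction k; intros A Hs.
  - destruct A; simpl in Hs; lia.
  - intros G D [n H1] H2. eapply CutMain; eauto.
    + intros B HB. apply IHk. lia.
    + apply incl_refl.
    + apply incl_refl.
Qed.

Lemma cut_adm R (Htr : forall a b c, R a b -> R b c -> R a c) A : cutP R A.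
Proof. eapply cut_all; eauto. Qed.

Lemma BCsub R (Htr : forall a b c, R a b -> R b c -> R a c) l A B K0 :
  Forall isABox K0 -> (forall i, In i (labels_list K0 ++ labels A) -> R i l) -> Q R K0 [A] ->
  forall n G2 D2, Qh R n G2 D2 -> forall G D, incl G2 G ->
  incl D2 (ABox l (AImp A B) :: ABox l B :: D) -> incl K0 G -> Q R G (ABox l B :: D).
Proof.
  intros Hb0 Hl0 Ha. induction 1; intros G' D' HG HD HH.
  - destruct (HD _ H0) as [E|[E|Hi]]; try discriminate. eapply Q_ax; simpl; eauto.
  - eapply Q_bot; eauto.
  - assert (I1 : Q R G' (A0 :: ABox l B :: D')).
    { assert (J : Q R G' (ABox l B :: A0 :: D')) by (apply (IHQh1 G' (A0::D')); auto; si).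
      eapply Q_mono; [exact J| |]; si. }
    assert (I2 : Q R (B0::G') (ABox l B :: D')).
    { apply (IHQh2 (B0::G') D'); auto; si. }
    eapply Q_impL; eauto.
  - destruct (HD _ H) as [E|[E|Hi]]; try discriminate.
    assert (I1 : Q R (A0::G') (B0 :: ABox l B :: D')).
    { assert (J : Q R (A0::G') (ABox l B :: B0 :: D')) by (apply (IHQh (A0::G') (B0::D')); auto; si).
      eapply Q_mono; [exact J| |]; si. }
    eapply Q_impR; [simpl; eauto|exact I1].
  - assert (I1 : Q R (A0::G') (ABox l B :: D')).
    { apply (IHQh (A0::G') D'); auto; si. }
    eapply Q_boxL; eauto.
  - rename H into HH1.
    destruct (HD _ H0) as [E|Hi].
    + injection E as <- <-.
      pose proof (Rinv R _ _ _ H4 A B HH1 [] (incl_refl _) (incl_refl _)) as Hinv.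
      assert (Hc : Q R (K0 ++ HH1) [B]).
      { apply (cut_adm R Htr A (K0 ++ HH1) [B]).
        - eapply Q_mono; [exact Ha| |]; si.
        - exists n. eapply Qmono; [exact Hinv| |]; si. }
      eapply Q_boxR; [left; reflexivity | | | | exact Hc].
      * apply Forall_app; auto.
      * intros x Hx. apply in_app_or in Hx. destruct Hx; auto.
      * intros i Hi. unfold labels_list in Hi. rewrite flat_map_app in Hi.
        repeat rewrite in_app_iff in Hi. destruct Hi as [[Hi|Hi]|Hi].
        -- apply Hl0. apply in_or_app; left; exact Hi.
        -- apply H3. apply in_or_app; left; exact Hi.
        -- apply H3. apply in_or_app; right. simpl. apply in_or_app; right; exact Hi.
    + eapply Q_boxR; [exact Hi | exact H1 | | exact H3 | exists n; exact H4].
      intros x Hx; auto.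
Qed.

Lemma BCmain R (Htr : forall a b c, R a b -> R b c -> R a c) l A B :
  forall n G1 D1, Qh R n G1 D1 -> forall G D, incl G1 G ->
  incl D1 (ABox l A :: ABox l B :: D) -> Q R G (ABox l (AImp A B) :: ABox l B :: D) ->
  Q R G (ABox l B :: D).
Proof.
  induction 1; intros G' D' HG HD Hb.
  - destruct (HD _ H0) as [E|[E|Hi]]; try discriminate. eapply Q_ax; simpl; eauto.
  - eapply Q_bot; eauto.
  - assert (I1 : Q R G' (A0 :: ABox l B :: D')).
    { assert (J : Q R G' (ABox l B :: A0 :: D')).
      { apply (IHQh1 G' (A0::D')); [exact HG|si|]. eapply Q_mono; [exact Hb| |]; si. }
      eapply Q_mono; [exact J| |]; si. }
    assert (I2 : Q R (B0::G') (ABox l B :: D')).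
    { apply (IHQh2 (B0::G') D'); [si|exact HD|]. eapply Q_mono; [exact Hb| |]; si. }
    eapply Q_impL; eauto.
  - destruct (HD _ H) as [E|[E|Hi]]; try discriminate.
    assert (I1 : Q R (A0::G') (B0 :: ABox l B :: D')).
    { assert (J : Q R (A0::G') (ABox l B :: B0 :: D')).
      { apply (IHQh (A0::G') (B0::D')); [si|si|]. eapply Q_mono; [exact Hb| |]; si. }
      eapply Q_mono; [exact J| |]; si. }
    eapply Q_impR; [simpl; eauto|exact I1].
  - assert (I1 : Q R (A0::G') (ABox l B :: D')).
    { apply (IHQh (A0::G') D'); [si|exact HD|]. eapply Q_mono; [exact Hb| |]; si. }
    eapply Q_boxL; eauto.
  - rename H into HH1.
    destruct (HD _ H0) as [E|Hi].
    + injection E as <- <-. destruct Hb as [m Hb].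
      eapply (BCsub R Htr l A B HH1 H1 H3 (ex_intro _ n H4)); [exact Hb|apply incl_refl|apply incl_refl|].
      intros x Hx; auto.
    + eapply Q_boxR; [exact Hi | exact H1 | | exact H3 | exists n; exact H4].
      intros x Hx; auto.
Qed.

Lemma boxcut_adm R (Htr : forall a b c, R a b -> R b c -> R a c) l A B G D :
  Q R G (ABox l A :: ABox l B :: D) -> Q R G (ABox l (AImp A B) :: ABox l B :: D) ->
  Q R G (ABox l B :: D).
Proof. intros [n H1] H2. eapply BCmain; eauto; apply incl_refl. Qed.


Lemma fromDeriv s G D (d : deriv s G D) : forall R, (forall a b c, R a b -> R b c -> R a c) ->
  (forall i j, prehist d i j -> R i j) -> Q R G D.
Proof.
  induction d; intros R Htr Hp; simpl in Hp.
  - eapply Q_mono; [apply IHd; auto| |].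
    + intros x Hx; eapply Permutation_in; eauto.
    + intros x Hx; eapply Permutation_in; eauto.
  - eapply Q_ax; left; reflexivity.
  - eapply Q_bot; left; reflexivity.
  - eapply Q_impL; [left; reflexivity| |].
    + eapply Q_mono; [apply IHd1; auto| |]; si.
    + eapply Q_mono; [apply IHd2; auto| |]; si.
  - eapply Q_impR; [left; reflexivity|].
    eapply Q_mono; [apply IHd; auto| |]; si.
  - eapply Q_boxL; [left; reflexivity|]. apply IHd; auto.
  - eapply Q_boxR; [left; reflexivity | exact f | | | apply IHd; auto].
    + si.
    + intros i Hi. apply Hp. left; auto.
  - eapply cut_adm; eauto.
  - eapply boxcut_adm; eauto.
Qed.

Lemma in_perm (x : aform) L : In x L -> exists L', Permutation L (x::L').
Proof.
  intros H. apply in_split in H. destruct H as [l1 [l2 ->]].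
  exists (l1 ++ l2). apply Permutation_sym, Permutation_middle.
Qed.

Lemma filter_perm (f : aform -> bool) L : Permutation L (filter (fun x => negb (f x)) L ++ filter f L).
Proof.
  induction L as [|a L IH]; simpl; auto.
  destruct (f a); simpl.
  - eapply Permutation_trans; [apply perm_skip, IH|]. apply Permutation_middle.
  - apply perm_skip, IH.
Qed.

Lemma toDeriv s R : forall n G D, Qh R n G D -> forall G' D', incl G G' -> incl D D' ->
  exists d : deriv s G' D', forall i j, prehist d i j -> R i j.
Proof.
  induction n as [|n IH]; intros G D HQ G' D' HG HD; inversion HQ; subst.
  - destruct (in_perm _ _ (HG _ H)) as [G1 P1]. destruct (in_perm _ _ (HD _ H0)) as [D1 P2].
    exists (d_perm s _ _ _ _ (d_ax s p G1 D1) (Permutation_sym P1) (Permutation_sym P2)).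
    simpl; tauto.
  - destruct (in_perm _ _ (HG _ H)) as [G1 P1].
    exists (d_perm s _ _ _ _ (d_bot s G1 D') (Permutation_sym P1) (Permutation_refl _)).
    simpl; tauto.
  - destruct (in_perm _ _ (HG _ H)) as [G1 P1].
    destruct (in_perm _ _ (HD _ H0)) as [D1 P2].
    exists (d_perm s _ _ _ _ (d_ax s p G1 D1) (Permutation_sym P1) (Permutation_sym P2)).
    simpl; tauto.
  - destruct (in_perm _ _ (HG _ H)) as [G1 P1].
    exists (d_perm s _ _ _ _ (d_bot s G1 D') (Permutation_sym P1) (Permutation_refl _)).
    simpl; tauto.
  -
    destruct (in_perm _ _ (HG _ H0)) as [G1 P1].
    assert (HG1 : incl G (AImp A B :: G1)). { intros x Hx. eapply Permutation_in; eauto. }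
    destruct (Linv R _ _ _ H1 A B G1 (A::D) HG1 (incl_refl _)) as [I1 _].
    assert (HG2 : incl (B::G) (AImp A B :: B :: G1)). { si. }
    destruct (Linv R _ _ _ H2 A B (B::G1) D HG2 (incl_refl _)) as [_ I2].
    destruct (IH _ _ I1 G1 (A::D')) as [d1 Hd1]; [apply incl_refl| si|].
    destruct (IH _ _ I2 (B::G1) D') as [d2 Hd2]; [si| auto|].
    exists (d_perm s _ _ _ _ (d_impL s A B G1 D' d1 d2) (Permutation_sym P1) (Permutation_refl _)).
    simpl. intros i j [Hi|Hi]; eauto.
  -
    destruct (in_perm _ _ (HD _ H0)) as [D1 P1].
    assert (HD1 : incl (B::D) (AImp A B :: B :: D1)).
    { intros x [<-|Hx]; [right; left; auto|]. apply HD in Hx. apply (Permutation_in _ P1) in Hx.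
      destruct Hx as [<-|Hx]; [left; auto| right; right; auto]. }
    pose proof (Rinv R _ _ _ H1 A B (A::G) (B::D1) (incl_refl _) HD1) as I1.
    destruct (IH _ _ I1 (A::G') (B::D1)) as [d1 Hd1]; [si|si|].
    exists (d_perm s _ _ _ _ (d_impR s A B G' D1 d1) (Permutation_refl _) (Permutation_sym P1)).
    simpl. auto.
  -
    destruct (in_perm _ _ (HG _ H0)) as [G1 P1].
    assert (HG1 : incl (A::G) (A :: ABox l A :: G1)).
    { apply icc. intros x Hx. eapply Permutation_in; eauto. }
    destruct (IH _ _ H1 (A :: ABox l A :: G1) D') as [d1 Hd1]; [exact HG1|exact HD|].
    exists (d_perm s _ _ _ _ (d_boxL s l A G1 D' d1) (Permutation_sym P1) (Permutation_refl _)).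
    simpl. auto.
  -
    rename H into HH.
    destruct (in_perm _ _ (HD _ H1)) as [D1 P1].
    set (f := fun x => if in_dec aform_eq_dec x HH then true else false).
    set (G0 := filter f G').
    assert (HG0 : incl HH G0).
    { intros x Hx. unfold G0. apply filter_In. split; [auto|].
      unfold f. destruct (in_dec aform_eq_dec x HH); tauto. }
    assert (HG0' : incl G0 HH).
    { intros x Hx. unfold G0 in Hx. apply filter_In in Hx. destruct Hx as [_ Hx].
      unfold f in Hx. destruct (in_dec aform_eq_dec x HH); [auto|discriminate]. }
    assert (Fb : Forall isABox G0).
    { rewrite Forall_forall in *. intros x Hx. apply H2. auto. }
    destruct (IH _ _ H5 G0 [A]) as [d1 Hd1]; [exact HG0|apply incl_refl|].
    pose proof (filter_perm f G') as Pf.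
    exists (d_perm s _ _ _ _ (d_boxR s j A G0 (filter (fun x => negb (f x)) G') D1 Fb d1)
      (Permutation_sym Pf) (Permutation_sym P1)).
    simpl. intros i j' [[-> Hi]|Hi]; auto.
    apply H4. apply in_app_or in Hi. apply in_or_app. destruct Hi as [Hi|Hi]; [left|right; auto].
    unfold labels_list in *. apply in_flat_map in Hi. destruct Hi as [x [Hx Hi]].
    apply in_flat_map. exists x. auto.
Qed.

Lemma ct_mono (P Q0 : nat -> nat -> Prop) : (forall a b, P a b -> clos_trans nat Q0 a b) ->
  forall a b, clos_trans nat P a b -> clos_trans nat Q0 a b.
Proof. intros H a b Hc. induction Hc; auto. eapply t_trans; eauto. Qed.

Lemma transfer s1 s2 Gamma Delta : cf_provable s1 Gamma Delta -> cf_provable s2 Gamma Delta.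
Proof.
  intros [G [D [d [E1 [E2 Hcf]]]]].
  set (R := clos_trans nat (prehist d)).
  assert (Htr : forall a b c, R a b -> R b c -> R a c) by (intros; eapply t_trans; eauto).
  destruct (fromDeriv s1 G D d R Htr (fun i j h => t_step _ _ _ _ h)) as [n HQ].
  destruct (toDeriv s2 R n G D HQ G D (incl_refl _) (incl_refl _)) as [d' Hd'].
  exists G, D, d'. split; [auto|split; [auto|]].
  intros i Hc. apply (Hcf i).
  assert (H2 : clos_trans nat R i i) by (eapply ct_mono; [|exact Hc]; intros; apply t_step; auto).
  eapply ct_mono; [|exact H2]. intros a b Hab; exact Hab.
Qed.


Theorem mainTheorem6 :
  forall Gamma Delta : list form,
    (cf_provable G3s_BoxCut Gamma Delta <-> cf_provable G3s_Cut Gamma Delta) /\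
    (cf_provable G3s_Cut Gamma Delta <-> cf_provable G3s Gamma Delta).
Proof.
  intros Gamma Delta. split; split; apply transfer.
Qed.
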